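(* Let $\mathbf z$ be a crystal. For every $\mathbf x\in\mathcal M_\infty(\bar c(\mathbf z))$, $$\|\mathbf h(\mathbf x)\|_\infty\le R(\mathbf z)\,\|\nabla\mathbf h(\mathbf x)\|_\infty.$$ In particular, for $0<c\le\bar c(\mathbf z)/R(\mathbf z)$ every $\mathbf x$ for which $\mathbf h(\mathbf x)$ is defined and $\|\nabla\mathbf h(\mathbf x)\|_\infty\le c$ lies in $\mathcal M_\infty(R(\mathbf z)c)\subset\mathcal M_\infty(\bar c(\mathbf z))$, so $\mathcal M^\nabla_\infty(c)$ is well defined.
   Context: Fix $a>0$, $b>0$. A crystal is $\mathbf z=(z_i)_{i=1}^N\in(\mathbb R^d)^N$ with $|z_i-z_j|=a$ or $>b$ for all $i\ne j$; pairs at distance $a$ are neighboring, $\langle i,j\rangle$. $\mathcal M=\{(\theta z_i+\eta)_i:\theta\in SO(d),\eta\in\mathbb R^d\}$. $\bar c(\mathbf z)>0$ is a constant such that every $\mathbf x$ with $\inf_{\mathbf y\in\mathcal M}\max_i|x_i-y_i|\le\bar c(\mathbf z)$ has a unique minimizer $\mathbf z(\mathbf x)\in\mathcal M$ of $(\sum_i|x_i-y_i|^2)^{1/2}$; $\mathbf h(\mathbf x)=\mathbf x-\mathbf z(\mathbf x)$. $\|\mathbf h\|_\infty=\max_i|h_i|$, $\|\nabla\mathbf h\|_\infty=\max_{\langle i,j\rangle}|h_i-h_j|$; $\mathcal M_\infty(c)=\{\mathbf x:\|\mathbf h(\mathbf x)\|_\infty\le c\}$, $\mathcal M^\nabla_\infty(c)=\{\mathbf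 x:\|\nabla\mathbf h(\mathbf x)\|_\infty\le c\}$. $R(\mathbf z)$ is the maximum over $i\ne j$ of the length (number of steps) of a shortest path $i=i_0\sim i_1\sim\cdots\sim i_n=j$ with each $\langle i_k,i_{k+1}\rangle$ neighboring ($+\infty$ if none exists). *)

(* Defs.v *)
From HB Require Import structures.
From mathcomp Require Import all_boot all_order all_algebra.
From mathcomp Require Import reals.
Set Implicit Arguments. Unset Strict Implicit. Unset Printing Implicit Defensive.
Import Order.TTheory GRing.Theory Num.Theory.
Local Open Scope ring_scope.

Section Defs.
Variables (R : realType) (d N : nat).

Definition config := 'I_N -> 'rV[R]_d.

Definition enorm (v : 'rV[R]_d) : R := Num.sqrt (\sum_(k < d) v 0 k ^+ 2).

Definition cdiff (x y : config) : config := fun i => x i - y i.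

Definition is_rotation (Q : 'M[R]_d) : Prop := Q^T *m Q = 1%:M /\ \det Q = 1.

(* the manifold M of rigid motions of z : (theta z_i + eta)_i ; with row
   vectors theta z_i is written z_i *m Q, Q ranging over SO(d). *)
Definition motions (z : config) (y : config) : Prop :=
  exists (Q : 'M[R]_d) (eta : 'rV[R]_d),
    is_rotation Q /\ forall i, y i = z i *m Q + eta.

Definition crystal (a b : R) (z : config) : Prop :=
  forall i j : 'I_N, i != j -> enorm (z i - z j) = a \/ b < enorm (z i - z j).

Definition nbr (a : R) (z : config) : rel 'I_N :=
  fun i j => (i != j) && (enorm (z i - z j) == a).

Definition supn (h : config) : R := \big[Num.max/0]_(i < N) enorm (h i).

Definition gradn (a : R) (z : config) (h : config) : R :=
  \big[Num.max/0]_(i < N) \big[Num.max/0]_(j < N | nbr a z i j) enorm (h i - h j).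

Definition l2dist (x y : config) : R :=
  Num.sqrt (\sum_(i < N) enorm (x i - y i) ^+ 2).

Definition is_minimizer (z x y : config) : Prop :=
  motions z y /\ forall y', motions z y' -> l2dist x y <= l2dist x y'.

Definition inf_sup_le (z x : config) (c : R) : Prop :=
  forall eps : R, 0 < eps -> exists y, motions z y /\ supn (cdiff x y) < c + eps.

Definition cbar_ok (z : config) (cbar : R) : Prop :=
  0 < cbar /\
  forall x : config, inf_sup_le z x cbar ->
    exists y, is_minimizer z x y /\ forall y', is_minimizer z x y' -> y' = y.

Definition walk (a : R) (z : config) (i j : 'I_N) (n : nat) : bool :=
  [exists s : n.-tuple 'I_N, path (nbr a z) i s && (last i s == j)].

(* length of a shortest path from i to j (if one exists it has < N steps,
   so searching n in 0..N-1 finds it) *)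
Definition gdist (a : R) (z : config) (i j : 'I_N) : nat :=
  find (walk a z i j) (iota 0 N).

(* every pair of distinct particles is joined by a path (R(z) < +oo) *)
Definition nbr_connected (a : R) (z : config) : Prop :=
  forall i j : 'I_N, i != j -> exists n, walk a z i j n.

Definition Rz (a : R) (z : config) : nat :=
  \max_(i < N) \max_(j < N | i != j) gdist a z i j.

End Defs.

(* Main.v *)
Require Import Defs.
From HB Require Import structures.
From mathcomp Require Import all_boot all_order all_algebra.
From mathcomp Require Import reals.
Import Order.TTheory GRing.Theory Num.Theory.
Local Open Scope ring_scope.
From mathcomp Require Import ring lra.
Set Implicit Arguments. Unset Strict Implicit.

Section Enorm.
Variables (R : realType) (d : nat).

Lemma lagrange (u v : 'I_d -> R) :
  (\sum_k u k * v k) ^+ 2 <= (\sum_k u k ^+ 2) * (\sum_k v k ^+ 2).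
Proof.
have H : 0 <= \sum_k \sum_l (u k * v l - u l * v k) ^+ 2.
  by apply: sumr_ge0 => k _; apply: sumr_ge0 => l _; exact: sqr_ge0.
have E : \sum_k \sum_l (u k * v l - u l * v k) ^+ 2 =
   ((\sum_k u k ^+ 2) * (\sum_k v k ^+ 2) - (\sum_k u k * v k) ^+ 2) *+ 2.
  have E1 : forall k l, (u k * v l - u l * v k) ^+ 2 =
     u k ^+ 2 * v l ^+ 2 + v k ^+ 2 * u l ^+ 2 - (u k * v k) * (u l * v l) *+ 2.
    by move=> k l; rewrite -mulr_natr; ring.
  under eq_bigr => k _ do under eq_bigr => l _ do rewrite E1.
  set U := \sum_k u k ^+ 2; set V := \sum_k v k ^+ 2; set W := \sum_k u k * v k.
  have A1 : \sum_k \sum_l u k ^+ 2 * v l ^+ 2 = U * V.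
    by rewrite mulr_suml; apply: eq_bigr => k _; rewrite mulr_sumr.
  have A2 : \sum_k \sum_l v k ^+ 2 * u l ^+ 2 = V * U.
    by rewrite mulr_suml; apply: eq_bigr => k _; rewrite mulr_sumr.
  have A3 : \sum_k \sum_l (u k * v k) * (u l * v l) = W * W.
    by rewrite mulr_suml; apply: eq_bigr => k _; rewrite mulr_sumr.
  have -> : \sum_k \sum_l (u k ^+ 2 * v l ^+ 2 + v k ^+ 2 * u l ^+ 2 - (u k * v k) * (u l * v l) *+ 2)
     = \sum_k \sum_l u k ^+ 2 * v l ^+ 2 + \sum_k \sum_l v k ^+ 2 * u l ^+ 2
       - (\sum_k \sum_l (u k * v k) * (u l * v l)) *+ 2.
    rewrite -sumrMnl -big_split -sumrB; apply: eq_bigr => k _.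
    by rewrite -sumrMnl -big_split -sumrB.
  rewrite A1 A2 A3 -mulr_natr; rewrite -[_ *+ 2]mulr_natr; ring.
move: H; rewrite E pmulrn_lge0 // subr_ge0. done.
Qed.

Lemma enorm_ge0 (v : 'rV[R]_d) : 0 <= enorm v.
Proof. exact: sqrtr_ge0. Qed.

Lemma enorm_sq (v : 'rV[R]_d) : enorm v ^+ 2 = \sum_k v 0 k ^+ 2.
Proof. by rewrite /enorm sqr_sqrtr // sumr_ge0 // => k _; exact: sqr_ge0. Qed.

Lemma enormD (u v : 'rV[R]_d) : enorm (u + v) <= enorm u + enorm v.
Proof.
rewrite -(ler_pXn2r (isT : (0 < 2)%N)) ?nnegrE ?addr_ge0 ?enorm_ge0 //.
rewrite enorm_sq sqrrD !enorm_sq.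
have -> : \sum_k (u + v) 0 k ^+ 2 =
   \sum_k u 0 k ^+ 2 + (\sum_k u 0 k * v 0 k) *+ 2 + \sum_k v 0 k ^+ 2.
  rewrite -sumrMnl -!big_split /=; apply: eq_bigr => k _; rewrite !mxE; ring.
rewrite lerD2r lerD2l lerMn2r /=.
apply: (le_trans (ler_norm _)).
rewrite -(ler_pXn2r (isT : (0 < 2)%N)) ?nnegrE ?mulr_ge0 ?enorm_ge0 //.
by rewrite real_normK ?num_real // exprMn !enorm_sq lagrange.
Qed.

Lemma enormN (v : 'rV[R]_d) : enorm (- v) = enorm v.
Proof. by rewrite /enorm; congr Num.sqrt; apply: eq_bigr => k _; rewrite mxE sqrrN. Qed.

Lemma enormMn (v : 'rV[R]_d) n : enorm (v *+ n) = enorm v *+ n.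
Proof.
rewrite /enorm.
have -> : \sum_k (v *+ n) 0 k ^+ 2 = n%:R ^+ 2 * \sum_k v 0 k ^+ 2.
  rewrite mulr_sumr; apply: eq_bigr => k _; by rewrite mulmxnE -(mulr_natr (v 0 k) n) exprMn mulrC.
rewrite (sqrtrM _ (sqr_ge0 (n%:R : R))) sqrtr_sqr ger0_norm ?ler0n // mulr_natl //.
Qed.

Lemma enorm_sum (I : finType) (F : I -> 'rV[R]_d) :
  enorm (\sum_i F i) <= \sum_i enorm (F i).
Proof.
elim/big_rec2: _ => [|i y1 y2 _ H].
  by rewrite /enorm big1 ?sqrtr0 // => k _; rewrite mxE expr0n.
by apply: (le_trans (enormD _ _)); rewrite lerD2l.
Qed.

Lemma enorm0 : enorm (0 : 'rV[R]_d) = 0.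
Proof. by rewrite /enorm big1 ?sqrtr0 // => k _; rewrite mxE expr0n. Qed.
End Enorm.


Section Main.
Variables (R : realType) (d N : nat).

Lemma sum_zero (z x y : config R d N) :
  is_minimizer z x y -> \sum_i (x i - y i) = 0.
Proof.
case=> [[Q [eta [HQ Hy]]] Hmin].
case: N x y z Hy Hmin => [|n] x y z Hy Hmin; first by rewrite big_ord0.
set S := \sum_i (x i - y i).
set t : 'rV[R]_d := \row_k (S 0 k / n.+1%:R).
have Hm : motions z (fun i => y i + t).
  by exists Q, (eta + t); split=> // i; rewrite Hy addrA.
have := Hmin _ Hm; rewrite /l2dist ler_sqrt; last first.
  by apply: sumr_ge0 => i _; exact: sqr_ge0.
move=> Hle0.
have L1 : \sum_i enorm (x i - y i) ^+ 2 = \sum_i \sum_k (x i - y i) 0 k ^+ 2.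
  by apply: eq_bigr => i _; rewrite enorm_sq.
have L2 : \sum_i enorm (x i - (y i + t)) ^+ 2 =
    \sum_i \sum_k ((x i - y i) 0 k - t 0 k) ^+ 2.
  by apply: eq_bigr => i _; rewrite enorm_sq; apply: eq_bigr => k _; rewrite !mxE opprD addrA.
move: Hle0; rewrite L1 L2.
set T := fun k => t 0 k.
have ES : forall k, \sum_i (x i - y i) 0 k = S 0 k.
  by move=> k; rewrite /S summxE.
have -> : \sum_i \sum_k ((x i - y i) 0 k - t 0 k) ^+ 2 =
   \sum_i \sum_k (x i - y i) 0 k ^+ 2 - \sum_k (S 0 k ^+ 2 / n.+1%:R).
  have -> : \sum_i \sum_k ((x i - y i) 0 k - t 0 k) ^+ 2 =
     \sum_i \sum_k (x i - y i) 0 k ^+ 2 +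
     \sum_i \sum_k (t 0 k ^+ 2 - (x i - y i) 0 k * t 0 k *+ 2).
    rewrite -big_split /=; apply: eq_bigr => i _; rewrite -big_split /=.
    by apply: eq_bigr => k _; rewrite -mulr_natr; ring.
  congr (_ + _); rewrite exchange_big /= -sumrN; apply: eq_bigr => k _.
  rewrite sumrB sumr_const card_ord sumrMnl -mulr_suml ES /t mxE.
  have hn : n.+1%:R != 0 :> R by rewrite pnatr_eq0.
  rewrite -[_ *+ n.+1]mulr_natr -[_ *+ 2]mulr_natr; field.
  by rewrite addrC natr1 pnatr_eq0.
rewrite lerBrDr gerDl => Hle.
have Hp : forall j : 'I_d, xpredT j -> 0 <= S 0 j ^+ 2 / n.+1%:R.
  by move=> j _; rewrite divr_ge0 ?sqr_ge0 ?ler0n.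
have H0 := psumr_eq0P Hp.
have Hs : \sum_(j | xpredT j) S 0 j ^+ 2 / n.+1%:R = 0.
  by apply/eqP; rewrite eq_le Hle sumr_ge0.
apply/rowP => k; rewrite mxE.
by move: (H0 Hs k isT) => /eqP; rewrite mulf_eq0 invr_eq0 pnatr_eq0 orbF sqrf_eq0 => /eqP.
Qed.
End Main.


Section Graph.
Variables (R : realType) (d N : nat) (a : R) (z : config R d N).

Lemma gradn_ge0 (h : config R d N) : 0 <= gradn a z h.
Proof. exact: bigmax_ge_id. Qed.

Lemma nbr_le (h : config R d N) i j :
  nbr a z i j -> enorm (h i - h j) <= gradn a z h.
Proof.
move=> Hij; rewrite /gradn.
have H1 := @le_bigmax _ _ _ (0:R) (fun i => \big[Num.max/0]_(j < N | nbr a z i j) enorm (h i - h j)) i.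
have H2 := @le_bigmax_cond _ _ _ (0:R) j (nbr a z i) (fun j => enorm (h i - h j)) Hij.
exact: le_trans H2 H1.
Qed.

Lemma path_bound (h : config R d N) (s : seq 'I_N) i :
  path (nbr a z) i s -> enorm (h i - h (last i s)) <= gradn a z h *+ size s.
Proof.
elim: s i => [|k s IH] i /=.
  by rewrite subrr enorm0.
case/andP=> Hik Hp.
have -> : h i - h (last k s) = (h i - h k) + (h k - h (last k s)).
  by rewrite addrA subrK.
apply: le_trans (enormD _ _) _.
by rewrite mulrS lerD ?nbr_le ?IH.
Qed.

Lemma walk_bound (h : config R d N) i j n :
  walk a z i j n -> enorm (h i - h j) <= gradn a z h *+ n.
Proof.
case/existsP=> s /andP [Hp /eqP Hl].
by rewrite -Hl -{2}(size_tuple s); apply: path_bound.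
Qed.

Lemma walk_short i j n : walk a z i j n -> exists2 m, (m < N)%N & walk a z i j m.
Proof.
case/existsP=> s /andP [Hp /eqP Hl].
move: Hl; case: (shortenP Hp) => p' Hp' Hu _ Hl.
exists (size p').
  have := card_uniqP Hu; rewrite /= => Hc.
  have := max_card [pred x in i :: p']; rewrite card_ord -/(card _).
  by move=> H; rewrite -ltnS -Hc.
apply/existsP; exists (in_tuple p'); rewrite /= Hp' /=.
by rewrite Hl.
Qed.

Lemma pair_bound (h : config R d N) i j :
  nbr_connected a z -> enorm (h i - h j) <= (Rz a z)%:R * gradn a z h.
Proof.
move=> Hc.
have [->|Hij] := eqVneq i j; first by rewrite subrr enorm0 mulr_ge0 ?ler0n ?gradn_ge0.
case: (Hc i j Hij) => n Hn.
case: (walk_short Hn) => m Hm Hw.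
have Hhas : has (walk a z i j) (iota 0 N).
  by apply/hasP; exists m => //; rewrite mem_iota.
have Hg := nth_find 0%N Hhas.
rewrite nth_iota ?add0n in Hg; last by rewrite -[X in (_ < X)%N](size_iota 0 N) -has_find.
apply: le_trans (walk_bound h Hg) _.
rewrite -[X in X <= _]mulr_natl ler_wpM2r ?gradn_ge0 // ler_nat.
rewrite /Rz.
have H1 := @leq_bigmax_cond _ (fun j => i != j) (fun j => gdist a z i j) j Hij.
have H2 := @leq_bigmax_cond _ xpredT (fun i => \max_(j < N | i != j) gdist a z i j) i isT.
exact: leq_trans H1 H2.
Qed.
End Graph.


Lemma key (R : realType) (d N : nat) (a : R) (z x y : config R d N) :
  is_minimizer z x y -> nbr_connected a z ->
  supn (cdiff x y) <= (Rz a z)%:R * gradn a z (cdiff x y).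
Proof.
move=> Hmin Hc.
have HS : \sum_i cdiff x y i = 0 := sum_zero Hmin.
set h := cdiff x y in HS *.
rewrite /supn; apply: bigmax_le => [|i _].
  by rewrite mulr_ge0 ?ler0n ?gradn_ge0.
have HN : (N != 0)%N by case: N i {x y z Hmin Hc HS h} => [[]|].
suff Hle : enorm (h i) *+ N <= ((Rz a z)%:R * gradn a z h) *+ N.
  by move: Hle; rewrite lerMn2r (negbTE HN).
rewrite -enormMn.
have -> : h i *+ N = \sum_j (h i - h j).
  by rewrite sumrB HS subr0 sumr_const card_ord.
apply: le_trans (enorm_sum _) _.
have -> : ((Rz a z)%:R * gradn a z h) *+ N = \sum_(j < N) ((Rz a z)%:R * gradn a z h).
  by rewrite sumr_const card_ord.
apply: ler_sum => j _; exact: pair_bound.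
Qed.

Theorem lemma2p4 (R : realType) (d N : nat) (a b : R) (z : config R d N)
    (cbar : R) :
  0 < a -> 0 < b -> crystal a b z -> nbr_connected a z -> cbar_ok z cbar ->
  (forall x y : config R d N,
      inf_sup_le z x cbar -> is_minimizer z x y ->
      supn (cdiff x y) <= cbar ->
      supn (cdiff x y) <= (Rz a z)%:R * gradn a z (cdiff x y)) /\
  (forall c : R, 0 < c -> (Rz a z)%:R * c <= cbar ->
    forall x y : config R d N,
      inf_sup_le z x cbar -> is_minimizer z x y ->
      gradn a z (cdiff x y) <= c ->
      supn (cdiff x y) <= (Rz a z)%:R * c /\ (Rz a z)%:R * c <= cbar).
Proof.
move=> _ _ _ Hc _.
split.
  by move=> x y _ Hmin _; exact: key.
move=> c _ Hcb x y _ Hmin Hg; split=> //.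
have H1 := key Hmin Hc.
have H2 : (Rz a z)%:R * gradn a z (cdiff x y) <= (Rz a z)%:R * c.
  by rewrite ler_wpM2l ?ler0n.
exact: le_trans H1 H2.
Qed.
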